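(* Let $(\vdash,\overline{\cdot},\widehat{\cdot})$ be a setting satisfying Pre-Relevance, let $\mathcal{S},\mathcal{S}'\subseteq\mathcal{L}$ with $\mathcal{S}\mid\mathcal{S}'$, let $\mathcal{E}$ be a complete extension of $\mathcal{AF}_{\vdash}(\mathcal{S}\cup\mathcal{S}')$, $\mathcal{E}_1=\mathcal{E}\cap\mathit{Arg}_{\vdash}(\mathcal{S})$ and $\mathcal{E}_2=\mathcal{E}\cap\mathit{Arg}_{\vdash}(\mathcal{S}')$. Then (1) $\mathcal{E}=\mathsf{Defended}(\mathcal{E}_1\cup\mathcal{E}_2,\mathcal{AF}_{\vdash}(\mathcal{S}\cup\mathcal{S}'))$, and (2) $\mathcal{E}_1$ is a complete extension of $\mathcal{AF}_{\vdash}(\mathcal{S})$.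
   Context: $\mathcal{L}$ is the set of formulas of a language built from propositional atoms; $\mathsf{Atoms}(\mathcal{S})$ is the set of atoms occurring in $\mathcal{S}$, and $\mathcal{S}_1\mid\mathcal{S}_2$ means $\mathsf{Atoms}(\mathcal{S}_1)\cap\mathsf{Atoms}(\mathcal{S}_2)=\emptyset$. A setting is $(\vdash,\overline{\cdot},\widehat{\cdot})$ with ${\vdash}\subseteq\wp_{\sf fin}(\mathcal{L})\times\mathcal{L}$ arbitrary, $\overline{\cdot}:\mathcal{L}\to\wp(\mathcal{L})$, $\widehat{\cdot}$ assigning to each nonempty finite set a finite set of formulas, with $\widehat{\emptyset}=\emptyset$. $\mathit{Arg}_{\vdash}(\mathcal{S})=\{(\Gamma,\gamma):\Gamma\subseteq\mathcal{S}\text{ finite},\Gamma\vdash\gamma\}$; $\mathcal{AF}_{\vdash}(\mathcal{S})$ is the attack graph on it where $(\Gamma,\gamma)$ attacks $(\Gamma',\gamma')$ iff $\gamma\in\overline{\phi}$ for some $\phi\in\widehat{\Gamma'}$. $\mathcal{A}$ defends $a$ iff every attacker of $a$ in the framework is attacked by a member of $\mathcal{A}$; $\mathsf{Defended}(\mathcal{A},\mathcal{AF}_{\vdash}(\mathcal{S}))$ is the set of arguments of $\mathit{Arg}_{\vdash}(\mathcal{S})$ defended by $\mathcal{A}$. Complete = conflict-free, defends all its members, and contains every argument it defends. Pre-Relevance of the setting: (a) for all $\mathcal{S}_1,\mathcal{S}_2,\phi$ with $\mathcal{S}_1\cup\{\phi\}\mid\mathcal{S}_2$, $\mathcal{S}_1\cup\mathcal{S}_2\vdash\phi$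 implies $\mathcal{S}_1'\vdash\phi$ for some $\mathcal{S}_1'\subseteq\mathcal{S}_1$; (b) primeness: for all sets of atoms $\mathcal{A}_1\mid\mathcal{A}_2$, all finite $\mathcal{S}_1,\mathcal{T}_1,\mathcal{S}_2,\mathcal{T}_2$ with $\mathsf{Atoms}(\mathcal{S}_i),\mathsf{Atoms}(\mathcal{T}_i)\subseteq\mathcal{A}_i$, and all $\phi,\psi$ with $\psi\in\overline{\phi}$, $\phi\in\widehat{\mathcal{T}_1\cup\mathcal{T}_2}$: if $\mathcal{S}_1\cup\mathcal{S}_2\vdash\psi$ then there are $i\in\{1,2\}$, $\mathcal{S}_i'\subseteq\mathcal{S}_i$, $\phi_i\in\widehat{\mathcal{T}_i}$, $\psi_i\in\overline{\phi_i}$ with $\mathcal{S}_i'\vdash\psi_i$; (c) $\widehat{\Delta}\subseteq\widehat{\Delta\cup\Delta'}$ for all finite $\Delta,\Delta'$. *)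

(* Defs.v *)
From mathcomp Require Import all_boot.
From mathcomp Require Import finmap.
Set Implicit Arguments. Unset Strict Implicit. Unset Printing Implicit Defensive.
Local Open Scope fset_scope.

(* A language: formulas of type [Form] (a choiceType, so that finite sets
   {fset Form} exist), atoms of type [Atom], and [occ φ p] meaning that the
   atom p occurs in φ.  Sets of formulas S ⊆ L are predicates Form -> Prop. *)

Definition AtomsS (Form Atom : Type) (occ : Form -> Atom -> Prop)
  (S : Form -> Prop) (p : Atom) : Prop := exists2 f, S f & occ f p.

Definition atom_disj (Form Atom : Type) (occ : Form -> Atom -> Prop)
  (S1 S2 : Form -> Prop) : Prop :=
  forall p, AtomsS occ S1 p -> AtomsS occ S2 p -> False.

Definition fsetS (Form : choiceType) (X : {fset Form}) : Form -> Prop :=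
  fun f => f \in X.

Record setting (Form : choiceType) := Setting {
  der : {fset Form} -> Form -> Prop;
  bar : Form -> Form -> Prop;                 (* bar φ ψ : ψ ∈ overline φ *)
  hat : {fset Form} -> {fset Form};
  hat0 : hat fset0 = fset0
}.

Section Args.
Variables (Form : choiceType) (st : setting Form).

Definition argument := ({fset Form} * Form)%type.

Definition Arg (S : Form -> Prop) (a : argument) : Prop :=
  (forall f, f \in a.1 -> S f) /\ der st a.1 a.2.

Definition attacks (a b : argument) : Prop :=
  exists2 phi, phi \in hat st b.1 & bar st phi a.2.

Definition defends (S : Form -> Prop) (A : argument -> Prop) (a : argument) : Prop :=
  forall b, Arg S b -> attacks b a -> exists2 c, A c & attacks c b.

Definition Defended (S : Form -> Prop) (A : argument -> Prop) (a : argument) : Prop :=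
  Arg S a /\ defends S A a.

Definition conflict_free (A : argument -> Prop) : Prop :=
  forall a b, A a -> A b -> ~ attacks a b.

Definition complete (S : Form -> Prop) (E : argument -> Prop) : Prop :=
  [/\ (forall a, E a -> Arg S a),
      conflict_free E,
      (forall a, E a -> defends S E a) &
      (forall a, Arg S a -> defends S E a -> E a)].
End Args.

Definition pre_relevance (Form : choiceType) (Atom : Type)
  (occ : Form -> Atom -> Prop) (st : setting Form) : Prop :=
  [/\
   (forall (S1 S2 : {fset Form}) (phi : Form),
      atom_disj occ (fsetS (phi |` S1)) (fsetS S2) ->
      der st (S1 `|` S2) phi ->
      exists2 S1' : {fset Form}, S1' `<=` S1 & der st S1' phi),
   (forall (A1 A2 : Atom -> Prop) (S1 T1 S2 T2 : {fset Form}) (phi psi : Form),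
      (forall p, A1 p -> A2 p -> False) ->
      (forall p, AtomsS occ (fsetS S1) p -> A1 p) ->
      (forall p, AtomsS occ (fsetS T1) p -> A1 p) ->
      (forall p, AtomsS occ (fsetS S2) p -> A2 p) ->
      (forall p, AtomsS occ (fsetS T2) p -> A2 p) ->
      bar st phi psi -> phi \in hat st (T1 `|` T2) ->
      der st (S1 `|` S2) psi ->
      (exists2 S1' : {fset Form}, S1' `<=` S1 &
         exists2 phi1, phi1 \in hat st T1 &
         exists2 psi1, bar st phi1 psi1 & der st S1' psi1) \/
      (exists2 S2' : {fset Form}, S2' `<=` S2 &
         exists2 phi2, phi2 \in hat st T2 &
         exists2 psi2, bar st phi2 psi2 & der st S2' psi2)) &
   (forall D D' : {fset Form}, hat st D `<=` hat st (D `|` D'))].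

(* Main.v *)
Require Import Defs.
From mathcomp Require Import all_boot.
From mathcomp Require Import finmap.
From Stdlib Require Import ClassicalEpsilon.
Set Implicit Arguments. Unset Strict Implicit. Unset Printing Implicit Defensive.
Local Open Scope fset_scope.

Definition dP (P : Prop) : bool := if excluded_middle_informative P then true else false.
Lemma dPP P : reflect P (dP P).
Proof. rewrite /dP; case: excluded_middle_informative => h; by constructor. Qed.

Lemma split_fs (Form : choiceType) (P : Form -> Prop) (X : {fset Form}) :
  X = [fset x in X | dP (P x)] `|` [fset x in X | ~~ dP (P x)].
Proof. apply/fsetP => x; rewrite in_fsetU !inE /=; by case: (x \in X); case: (dP (P x)). Qed.

Lemma filt_sub (Form : choiceType) (p : Form -> bool) (X : {fset Form}) :
  [fset x in X | p x] `<=` X.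
Proof. apply/fsubsetP => x; rewrite !inE /=; by case/andP. Qed.

Lemma filt_empty (Form : choiceType) (P : Form -> Prop) (X : {fset Form}) :
  (forall f, f \in X -> P f) -> [fset x in X | ~~ dP (P x)] = fset0.
Proof.
move=> h; apply/fsetP => x; rewrite !inE /=.
case hx: (x \in X) => //=; by case: dPP => // /(_ (h x hx)).
Qed.

Lemma hat_sub (Form : choiceType) (Atom : Type) (occ : Form -> Atom -> Prop)
  (st : setting Form) (X Y : {fset Form}) :
  pre_relevance occ st -> X `<=` Y -> hat st X `<=` hat st Y.
Proof.
move=> [_ _ hc] s; have := hc X Y; by rewrite (fsetUidPr _ _ s).
Qed.

Lemma attacks_sub (Form : choiceType) (Atom : Type) (occ : Form -> Atom -> Prop)
  (st : setting Form) (X : {fset Form}) y (b c : argument Form) :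
  pre_relevance occ st -> X `<=` b.1 -> attacks st c (X, y) -> attacks st c b.
Proof.
move=> HP s [phi h hb]; exists phi => //.
exact: (fsubsetP (hat_sub HP s)).
Qed.

Lemma key (Form : choiceType) (Atom : Type) (occ : Form -> Atom -> Prop)
  (st : setting Form) (S S' : Form -> Prop) (G T : {fset Form}) g phi :
  pre_relevance occ st -> atom_disj occ S S' ->
  (forall f, f \in G -> S f \/ S' f) -> (forall f, f \in T -> S f \/ S' f) ->
  der st G g -> phi \in hat st T -> bar st phi g ->
  (exists2 G', G' `<=` G /\ (forall f, f \in G' -> S f) &
     exists2 phi1, phi1 \in hat st [fset x in T | dP (S x)] &
     exists2 psi1, bar st phi1 psi1 & der st G' psi1) \/
  (exists2 G', G' `<=` G /\ (forall f, f \in G' -> S' f) &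
     exists2 phi2, phi2 \in hat st [fset x in T | ~~ dP (S x)] &
     exists2 psi2, bar st phi2 psi2 & der st G' psi2).
Proof.
move=> HP Hd GS TS Gd hphi hb.
have [_ Hb _] := HP.
have At1 : forall X : {fset Form}, forall p,
    AtomsS occ (fsetS [fset x in X | dP (S x)]) p -> AtomsS occ S p.
  move=> X p [f]; rewrite /fsetS !inE /= => /andP [_ /dPP hf] ho; by exists f.
have At2 : forall X : {fset Form}, (forall f, f \in X -> S f \/ S' f) -> forall p,
    AtomsS occ (fsetS [fset x in X | ~~ dP (S x)]) p -> AtomsS occ S' p.
  move=> X XS p [f]; rewrite /fsetS !inE /= => /andP [fX hf] ho; exists f => //.
  case: (XS f fX) => // h; move: hf; by case: dPP.
rewrite (split_fs S T) in hphi.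
rewrite (split_fs S G) in Gd.
case: (Hb (AtomsS occ S) (AtomsS occ S') _ _ _ _ _ _ Hd (At1 G) (At1 T)
         (At2 G GS) (At2 T TS) hb hphi Gd)
  => [[G' s h]|[G' s h]]; [left|right]; exists G' => //; split.
- exact: (fsubset_trans s (filt_sub _ _)).
- move=> f /(fsubsetP s); rewrite !inE /= => /andP [_ /dPP] //.
- exact: (fsubset_trans s (filt_sub _ _)).
- move=> f /(fsubsetP s); rewrite !inE /= => /andP [fG hf].
  case: (GS f fG) => // h'; move: hf; by case: dPP.
Qed.

Lemma inE_sub (Form : choiceType) (Atom : Type) (occ : Form -> Atom -> Prop)
  (st : setting Form) (Su : Form -> Prop) (E : argument Form -> Prop)
  (c : argument Form) (X : {fset Form}) y :
  pre_relevance occ st -> complete st Su E -> E c -> X `<=` c.1 ->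
  der st X y -> E (X, y).
Proof.
move=> HP [EArg _ Edef Ecl] Ec s d.
have [cS _] := EArg c Ec.
apply: Ecl; first split => //.
  by move=> f /(fsubsetP s) /cS.
move=> b bA batt; apply: (Edef c Ec b bA).
exact: (attacks_sub HP s batt).
Qed.

Theorem lemma5 (Form : choiceType) (Atom : Type) (occ : Form -> Atom -> Prop)
  (st : setting Form) (S S' : Form -> Prop) (E : argument Form -> Prop) :
  pre_relevance occ st ->
  atom_disj occ S S' ->
  complete st (fun f => S f \/ S' f) E ->
  let E1 := fun a => E a /\ Arg st S a in
  let E2 := fun a => E a /\ Arg st S' a in
  (forall a, E a <-> Defended st (fun f => S f \/ S' f) (fun b => E1 b \/ E2 b) a)
  /\ complete st S E1.
Proof.
move=> HP Hd Hc E1 E2.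
have [EArg Ecf Edef Ecl] := Hc.
have hatT1 : forall T : {fset Form}, hat st [fset x in T | dP (S x)] `<=` hat st T.
  move=> T; exact: hat_sub HP (filt_sub _ _).
have hatT2 : forall T : {fset Form}, hat st [fset x in T | ~~ dP (S x)] `<=` hat st T.
  move=> T; exact: hat_sub HP (filt_sub _ _).
have weak : forall a, Arg st S a -> Arg st (fun f => S f \/ S' f) a.
  move=> a [h1 h2]; split => // f /h1; by left.
have Hkey : forall b, Arg st (fun f => S f \/ S' f) b -> forall c, E c -> attacks st c b ->
    exists2 c', E1 c' \/ E2 c' & attacks st c' b.
  move=> b [bS _] [G g] Ec [phi hphi hbar].
  have [GS Gd] := EArg _ Ec.
  case: (key HP Hd GS bS Gd hphi hbar)
    => [[G' [s GS'] [phi1 h1 [psi1 b1 d1]]]|[G' [s GS'] [phi1 h1 [psi1 b1 d1]]]];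
    exists (G', psi1).
  - left; split; first exact: (inE_sub HP Hc Ec s d1). by split.
  - exists phi1 => //; exact: (fsubsetP (hatT1 _)).
  - right; split; first exact: (inE_sub HP Hc Ec s d1). by split.
  - exists phi1 => //; exact: (fsubsetP (hatT2 _)).
split.
  move=> a; split.
    move=> Ea; split; first exact: EArg.
    move=> b bA batt; have [c Ec catt] := Edef a Ea b bA batt; exact: Hkey bA c Ec catt.
  move=> [aA adef]; apply: Ecl => // b bA batt.
  have [c [[Ec _]|[Ec _]] catt] := adef b bA batt; by exists c.
split.
- by move=> a [].
- move=> a b [Ea _] [Eb _]; exact: Ecf.
- move=> a [Ea aS] b bS batt.
  have [c Ec catt] := Edef a Ea b (weak b bS) batt.
  move: Ec catt; case: c => [G g] Ec [phi hphi hbar].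
  have [GS Gd] := EArg _ Ec.
  have [bS1 _] := bS.
  have bS2 : forall f, f \in b.1 -> S f \/ S' f by move=> f /bS1; left.
  case: (key HP Hd GS bS2 Gd hphi hbar)
    => [[G' [s GS'] [phi1 h1 [psi1 b1 d1]]]|[G' [s GS'] [phi1 h1 [psi1 b1 d1]]]].
  + exists (G', psi1).
      split; first exact: (inE_sub HP Hc Ec s d1). by split.
    exists phi1 => //; exact: (fsubsetP (hatT1 _)).
  + move: h1; by rewrite (filt_empty bS1) hat0 in_fset0.
- move=> a aS adef; split => //.
  apply: Ecl; first exact: weak.
  move=> b [bS bd] [phi hphi hbar].
  have [aS1 _] := aS.
  have aS2 : forall f, f \in a.1 -> S f \/ S' f by move=> f /aS1; left.
  case: (key HP Hd bS aS2 bd hphi hbar)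
    => [[G' [s GS'] [phi1 h1 [psi1 b1 d1]]]|[G' [s GS'] [phi1 h1 [psi1 b1 d1]]]].
  + have b'S : Arg st S (G', psi1) by split.
    have b'att : attacks st (G', psi1) a.
      exists phi1 => //; exact: (fsubsetP (hatT1 _)).
    have [c [Ec _] catt] := adef _ b'S b'att.
    exists c => //; exact: (attacks_sub HP s catt).
  + move: h1; by rewrite (filt_empty aS1) hat0 in_fset0.
Qed.
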